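(* Let $R$ be a dp-finite ring such that $R/\mathfrak{m}$ is infinite for every maximal ideal $\mathfrak{m}$ of $R$. Then $\mathrm{br}(R)\le\mathrm{dp\text{-}rk}(R)$; in particular, $\mathrm{br}(R)$ is finite.
   Context: Rings are commutative and unital; $\mathrm{dp\text{-}rk}(R)$ denotes the dp-rank of the structure $(R,+,\cdot)$, and $R$ is dp-finite if this is finite. The breadth $\mathrm{br}(R)$ satisfies $\mathrm{br}(R)\le n$ iff for any $x_1,\ldots,x_{n+1}\in R$ there is $i$ such that the ideal generated by $x_1,\ldots,x_{n+1}$ equals the ideal generated by $\{x_j:j\neq i\}$. *)

(* Defs.v *)
From HB Require Import structures.
From mathcomp Require Import all_boot all_order all_algebra.
Set Implicit Arguments. Unset Strict Implicit. Unset Printing Implicit Defensive.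
Import GRing.Theory.
Local Open Scope ring_scope.

Inductive rterm : Type :=
  | RVar of nat | RZero | ROne | RAdd of rterm & rterm | ROpp of rterm | RMul of rterm & rterm.

Inductive rformula : Type :=
  | FEq of rterm & rterm | FTrue | FFalse | FNot of rformula
  | FAnd of rformula & rformula | FOr of rformula & rformula | FImp of rformula & rformula
  | FExists of nat & rformula | FForall of nat & rformula.

Section Semantics.
Variable R : comPzRingType.

Fixpoint teval (e : nat -> R) (t : rterm) : R :=
  match t with
  | RVar v => e v | RZero => 0 | ROne => 1
  | RAdd a b => teval e a + teval e b
  | ROpp a => - teval e a
  | RMul a b => teval e a * teval e b
  end.

Definition upd (e : nat -> R) (v : nat) (r : R) : nat -> R :=
  fun w => if w == v then r else e w.

Fixpoint holds (e : nat -> R) (f : rformula) : Prop :=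
  match f with
  | FEq a b => teval e a = teval e b
  | FTrue => True | FFalse => False
  | FNot g => ~ holds e g
  | FAnd g h => holds e g /\ holds e h
  | FOr g h => holds e g \/ holds e h
  | FImp g h => holds e g -> holds e h
  | FExists v g => exists r : R, holds (upd e v r) g
  | FForall v g => forall r : R, holds (upd e v r) g
  end.

(* environment for phi(x; y): variable 0 is x := a, variable k+1 is y_k := b k *)
Definition xenv (a : R) (b : nat -> R) : nat -> R :=
  fun v => if v is k.+1 then b k else a.

(* dp-rk(R) <= n : there is no ict-pattern of depth n+1 (for the home sort,
   x a single variable), stated via compactness with finite patterns in R. *)
Definition dp_rank_le (n : nat) : Prop :=
  ~ exists phi : 'I_n.+1 -> rformula,
      forall m : nat, exists b : 'I_n.+1 -> 'I_m -> (nat -> R),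
        forall eta : 'I_n.+1 -> 'I_m, exists a : R,
          forall (i : 'I_n.+1) (j : 'I_m), holds (xenv a (b i j)) (phi i) <-> j = eta i.

Definition is_ideal (I : R -> Prop) : Prop :=
  I 0 /\ (forall x y, I x -> I y -> I (x + y)) /\ (forall r x, I x -> I (r * x)).

Definition maximal_ideal (I : R -> Prop) : Prop :=
  is_ideal I /\ ~ I 1 /\
  forall J : R -> Prop, is_ideal J -> (forall x, I x -> J x) ->
    (forall x, J x <-> I x) \/ J 1.

(* R / I is infinite: no finite list of elements meets every coset of I *)
Definition infinite_quotient (I : R -> Prop) : Prop :=
  ~ exists s : seq R, forall x : R, exists2 y, y \in s & I (x - y).

Definition in_ideal_gen (k : nat) (x : 'I_k -> R) (P : pred 'I_k) (z : R) : Prop :=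
  exists c : 'I_k -> R, z = \sum_(j < k | P j) c j * x j.

Definition breadth_le (n : nat) : Prop :=
  forall x : 'I_n.+1 -> R, exists i : 'I_n.+1,
    forall z : R, in_ideal_gen x predT z <-> in_ideal_gen x (fun j => j != i) z.

End Semantics.

(* Main.v *)
Require Import Defs.
From mathcomp Require Import all_boot all_order all_algebra.
From mathcomp Require Import boolp classical_sets.
Set Implicit Arguments. Unset Strict Implicit. Unset Printing Implicit Defensive.
Import GRing.Theory.
Local Open Scope ring_scope.

Lemma teval_ext (R : comPzRingType) (e e' : nat -> R) t :
  (forall w, e w = e' w) -> teval e t = teval e' t.
Proof. by move=> H; elim: t => //= [a -> b ->|a ->|a -> b ->]. Qed.

Lemma holds_ext (R : comPzRingType) f : forall (e e' : nat -> R),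
  (forall w, e w = e' w) -> (holds e f <-> holds e' f).
Proof.
elim: f => //=.
- by move=> a b e e' H; rewrite !(teval_ext a H) !(teval_ext b H).
- by move=> g IH e e' H; rewrite (IH e e' H).
- by move=> g IHg h IHh e e' H; rewrite (IHg e e' H) (IHh e e' H).
- by move=> g IHg h IHh e e' H; rewrite (IHg e e' H) (IHh e e' H).
- by move=> g IHg h IHh e e' H; rewrite (IHg e e' H) (IHh e e' H).
- move=> v g IH e e' H.
  have Hw : forall r w, upd e v r w = upd e' v r w by move=> r w; rewrite /upd; case: eqP.
  split=> -[r Hr]; exists r; [exact/(IH _ _ (Hw r)) | exact/(IH _ _ (Hw r))].
- move=> v g IH e e' H.
  have Hw : forall r w, upd e v r w = upd e' v r w by move=> r w; rewrite /upd; case: eqP.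
  split=> Hr r; [exact/(IH _ _ (Hw r)) | exact/(IH _ _ (Hw r))].
Qed.

Lemma holds_extI (R : comPzRingType) f (e e' : nat -> R) :
  holds e f -> (forall w, e w = e' w) -> holds e' f.
Proof. by move=> Hf H; apply/(holds_ext f H). Qed.

Lemma holds_exs (R : comPzRingType) (f : rformula) (vs : seq nat) : forall (e : nat -> R),
  holds e (foldr FExists f vs) <->
  exists c : nat -> R, holds (fun w => if w \in vs then c w else e w) f.
Proof.
elim: vs => [|v vs IH] e /=.
  split; [by move=> H; exists e | by case=> c]. 
split.
- move=> [r /IH [c Hc]]; exists (fun w => if w \in vs then c w else r).
  apply: (holds_extI Hc) => w; rewrite in_cons /upd.
  by case: (w \in vs); case: eqP => [->|]; rewrite ?orbT ?orbF.
- move=> [c Hc]; exists (c v); apply/IH; exists c.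
  apply: (holds_extI Hc) => w; rewrite in_cons /upd.
  by case: (w \in vs); case: eqP => [->|]; rewrite ?orbT ?orbF.
Qed.
Fixpoint st (n m : nat) : rterm :=
  match m with 0 => RZero
  | m'.+1 => RAdd (st n m') (RMul (RVar (n + 3 + m')%N) (RVar m'.+2)) end.
Arguments st : simpl never.
Definition body (n i : nat) := FAnd (FEq (RVar (n + 3 + i)%N) RZero)
   (FEq (RVar 0) (RAdd (RVar 1) (st n n.+1))).
Definition phiF (n i : nat) := foldr FExists (body n i) (iota (n + 3) n.+1).
Definition bvec (R : comPzRingType) n (x : 'I_n.+1 -> R) (t : R) : nat -> R :=
  fun k => if k is k'.+1 then x (inord k') else t.

Lemma st_eval (R : comPzRingType) n (E : nat -> R) m : (m <= n.+1)%N ->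
  teval E (st n m) = \sum_(k < m) E (n + 3 + k)%N * E k.+2.
Proof.
elim: m => [|m IH] Hm /=; first by rewrite big_ord0.
by rewrite big_ord_recr /= IH // ltnW.
Qed.

Lemma body_holds (R : comPzRingType) n i (E : nat -> R) :
  holds E (body n i) <-> E (n + 3 + i)%N = 0 /\
     E 0%N = E 1%N + \sum_(k < n.+1) E (n + 3 + k)%N * E k.+2.
Proof. rewrite /= big_ord_recr /= st_eval //; tauto. Qed.

Lemma phiF_holds (R : comPzRingType) n (x : 'I_n.+1 -> R) (i : 'I_n.+1) a t :
  holds (xenv a (bvec x t)) (phiF n i) <-> in_ideal_gen x (fun j => j != i) (a - t).
Proof.
rewrite /phiF holds_exs.
pose E (c : nat -> R) w := if w \in iota (n + 3) n.+1 then c w else xenv a (bvec x t) w.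
have E0 c : E c 0%N = a by rewrite /E mem_iota addn3.
have E1 c : E c 1%N = t by rewrite /E mem_iota addn3.
have Ek c (k : 'I_n.+1) : E c k.+2 = x k.
  rewrite /E mem_iota.
  have -> : (n + 3 <= k.+2)%N = false by apply/negbTE; rewrite -ltnNge addn3 ltnS ltnS ltn_ord.
  by rewrite /= inord_val.
have Ec c k : (k < n.+1)%N -> E c (n + 3 + k)%N = c (n + 3 + k)%N.
  by move=> hk; rewrite /E mem_iota leq_addr /= ltn_add2l hk.
split.
- move=> [c Hc]; have /body_holds [Hi Ha] : holds (E c) (body n i) := Hc.
  rewrite E0 E1 in Ha.
  exists (fun j : 'I_n.+1 => c (n + 3 + j)%N).
  rewrite Ha addrC addKr (bigD1 i) //= Hi mul0r add0r.
  by apply: eq_bigr => j _; rewrite Ek Ec.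
- move=> [d Hd].
  exists (fun w => let k := (w - (n + 3))%N in if k == i :> nat then 0 else d (inord k)).
  apply/(body_holds n i (E _)).
  split; first by rewrite Ec //= addKn eqxx.
  rewrite E0 E1 -[a](subrK t) Hd addrC; congr (_ + _).
  rewrite [RHS](bigD1 i) //= Ec //= addKn eqxx mul0r add0r.
  apply: eq_bigr => j hj; rewrite Ek Ec //= addKn.
  have -> : (nat_of_ord j == nat_of_ord i) = false by apply/negbTE.
  by rewrite inord_val.
Qed.
Lemma ideal_opp (R : comPzRingType) (I : R -> Prop) x : is_ideal I -> I x -> I (- x).
Proof. by move=> [_ [_ HM]] Hx; rewrite -mulN1r; apply: HM. Qed.

Lemma ideal_sub (R : comPzRingType) (I : R -> Prop) x y :
  is_ideal I -> I x -> I y -> I (x - y).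
Proof. by move=> HI Hx Hy; case: (HI) => _ [HD _]; apply: HD => //; apply: ideal_opp. Qed.

Lemma gen_ideal (R : comPzRingType) k (x : 'I_k -> R) (P : pred 'I_k) :
  is_ideal (in_ideal_gen x P).
Proof.
split; [|split].
- by exists (fun=> 0); rewrite big1 // => j _; rewrite mul0r.
- move=> y z [c ->] [d ->]; exists (fun j => c j + d j).
  by rewrite -big_split /=; apply: eq_bigr => j _; rewrite mulrDl.
- move=> r y [c ->]; exists (fun j => r * c j).
  by rewrite mulr_sumr; apply: eq_bigr => j _; rewrite mulrA.
Qed.

Lemma gen_elem (R : comPzRingType) k (x : 'I_k -> R) (P : pred 'I_k) i :
  P i -> in_ideal_gen x P (x i).
Proof.
move=> Pi; exists (fun j => if j == i then 1 else 0).
rewrite (bigD1 i) //= eqxx mul1r big1 ?addr0 // => j /andP [_ /negPf ->].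
by rewrite mul0r.
Qed.

Lemma gen_sub (R : comPzRingType) k (x : 'I_k -> R) (P : pred 'I_k) z :
  in_ideal_gen x P z -> in_ideal_gen x predT z.
Proof.
move=> [c ->]; exists (fun j => if P j then c j else 0).
rewrite big_mkcond /=; apply: eq_bigr => j _; by case: (P j); rewrite ?mul0r.
Qed.

Lemma gen_redundant (R : comPzRingType) k (x : 'I_k -> R) (i : 'I_k) z :
  in_ideal_gen x (fun j => j != i) (x i) -> in_ideal_gen x predT z ->
  in_ideal_gen x (fun j => j != i) z.
Proof.
move=> Hxi [c ->]; rewrite (bigD1 i) //=.
have [_ [HD HM]] := gen_ideal x (fun j => j != i).
apply: HD; first exact: HM.
by exists c.
Qed.

Lemma exists_maximal (R : comPzRingType) (A : R -> Prop) :
  is_ideal A -> ~ A 1 -> exists M, maximal_ideal M /\ forall x, A x -> M x.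
Proof.
move=> IA nA1.
pose P (B : set R) := B = set0 \/ (is_ideal B /\ ~ B 1 /\ forall x, A x -> B x).
have [M [PM Mmax]] : exists M, P M /\ forall B, (M `<` B)%classic -> ~ P B.
  apply: Zorn_bigcup => F FP Ftot.
  have [[X FX X0]|allnil] := pselect (exists2 X, F X & X <> set0).
    have [//|[IX [nX1 AX]]] := FP X FX.
    right; split; [split; [|split]|split].
    - by exists X => //; case: IX.
    - move=> y z [Y FY Yy] [Z FZ Zz].
      have [YZ|ZY] := Ftot Y Z FY FZ.
      + have [Z0|[IZ _]] := FP Z FZ; first by rewrite Z0 in Zz.
        by exists Z => //; case: IZ => _ [HD _]; apply: HD => //; apply: YZ.
      + have [Y0|[IY _]] := FP Y FY; first by rewrite Y0 in Yy.
        by exists Y => //; case: IY => _ [HD _]; apply: HD => //; apply: ZY.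
    - move=> r y [Y FY Yy]; have [Y0|[IY _]] := FP Y FY; first by rewrite Y0 in Yy.
      by exists Y => //; case: IY => _ [_ HM]; apply: HM.
    - move=> [Y FY Y1]; have [Y0|[_ [nY1 _]]] := FP Y FY; first by rewrite Y0 in Y1.
      exact: nY1.
    - by move=> y Ay; exists X => //; apply: AX.
  left; apply/seteqP; split => // y [Y FY Yy].
  apply: allnil; exists Y => // Y0; by rewrite Y0 in Yy.
have M0 : M <> set0.
  move=> M0; apply: (Mmax A); last by right.
  rewrite M0; split; first by move=> ?.
  by move=> /(_ 0) H; apply: H; case: IA.
have [//|[IM [nM1 AM]]] := PM.
exists M; split=> //; split=> //; split=> // J IJ MJ.
have [J1|nJ1] := pselect (J 1); first by right.
left=> y; split; last exact: MJ.
move=> Jy; apply: contrapT => nMy; apply: (Mmax J).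
  by split=> // H; apply: nMy; apply: H.
by right; split=> //; split=> // z Az; apply: MJ; apply: AM.
Qed.
Lemma distinct_seq (R : comPzRingType) (M : R -> Prop) :
  is_ideal M -> infinite_quotient M -> forall m, exists r : nat -> R,
  forall j j', (j < m)%N -> (j' < m)%N -> j <> j' -> ~ M (r j - r j').
Proof.
move=> IM hq.
have next : forall s : seq R, exists x, forall y, y \in s -> ~ M (x - y).
  move=> s; apply: contrapT => H; apply: hq; exists s => x.
  apply: contrapT => Hx; apply: H; exists x => y ys Mxy; apply: Hx; by exists y.
have gen : forall m, exists s : seq R, size s = m /\
   forall j j', (j < j')%N -> (j' < m)%N -> ~ M (nth 0 s j' - nth 0 s j).
  elim=> [|m [s [Hs Hp]]]; first by exists [::].
  have [x Hx] := next s.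
  exists (rcons s x); split; first by rewrite size_rcons Hs.
  move=> j j' hjj' hj'.
  have hjm : (j < m)%N by apply: leq_trans hjj' _; rewrite -ltnS.
  rewrite !nth_rcons Hs hjm.
  move: hj'; rewrite ltnS leq_eqVlt => /orP [/eqP ->|hj'].
    by rewrite ltnn eqxx; apply: Hx; rewrite mem_nth // Hs.
  by rewrite hj'; apply: Hp.
move=> m; have [s [Hs Hp]] := gen m; exists (nth 0 s) => j j' hj hj' ne.
have [lt|gt|eq] := ltngtP j j'.
- move=> H; apply: (Hp j j' lt hj'); rewrite -opprB; exact: ideal_opp.
- exact: Hp.
- by [].
Qed.

Theorem lemma5p6 (R : comPzRingType)
  (hinf : forall I : R -> Prop, maximal_ideal I -> infinite_quotient I)
  (n : nat) (hdp : dp_rank_le R n) : breadth_le R n.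
Proof.
move=> x; apply: contrapT => Hn.
have Hi : forall i, ~ (forall z, in_ideal_gen x predT z <-> in_ideal_gen x (fun j => j != i) z).
  by move=> i Hz; apply: Hn; exists i.
have Hxi : forall i, ~ in_ideal_gen x (fun j => j != i) (x i).
  move=> i Hx; apply: (Hi i) => z; split; [exact: gen_redundant | exact: gen_sub].
have HR : forall (i : 'I_n.+1) m, exists r : nat -> R, forall j j', (j < m)%N -> (j' < m)%N ->
    j <> j' -> ~ in_ideal_gen x (fun j => j != i) ((r j - r j') * x i).
  move=> i m.
  have [_ [HD HM]] := gen_ideal x (fun j => j != i).
  have IA : is_ideal (fun r => in_ideal_gen x (fun j => j != i) (r * x i)).
    split; [|split].
    - by rewrite mul0r; case: (gen_ideal x (fun j => j != i)).
    - by move=> y z Hy Hz; rewrite mulrDl; apply: HD.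
    - by move=> r y Hy; rewrite -mulrA; apply: HM.
  have nA1 : ~ in_ideal_gen x (fun j => j != i) (1 * x i) by rewrite mul1r.
  have [M [HMmax AM]] := exists_maximal IA nA1.
  have [r Hr] := distinct_seq HMmax.1 (hinf M HMmax) m.
  exists r => j j' hj hj' ne Hin; apply: (Hr j j' hj hj' ne); exact: AM.
apply: hdp; exists (fun i : 'I_n.+1 => phiF n i) => m.
pose rr i := projT1 (cid (HR i m)).
have rrP i : forall j j', (j < m)%N -> (j' < m)%N ->
    j <> j' -> ~ in_ideal_gen x (fun j => j != i) ((rr i j - rr i j') * x i).
  exact: (projT2 (cid (HR i m))).
exists (fun i j => bvec x (rr i j * x i)) => eta.
exists (\sum_(k < n.+1) rr k (eta k) * x k) => i j.
rewrite phiF_holds.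
set S := \sum_(k < n.+1 | k != i) rr k (eta k) * x k.
have key : \sum_(k < n.+1) rr k (eta k) * x k - rr i j * x i =
    S + (rr i (eta i) - rr i j) * x i.
  by rewrite (bigD1 i) //= -/S mulrBl addrA [_ * _ + S]addrC.
have SI : in_ideal_gen x (fun k => k != i) S by exists (fun k => rr k (eta k)).
rewrite key; split.
- move=> Hin; apply: contrapT => ne.
  apply: (rrP i (eta i) j (ltn_ord _) (ltn_ord _)).
    by move=> E; apply: ne; apply: val_inj.
  have -> : (rr i (eta i) - rr i j) * x i = S + (rr i (eta i) - rr i j) * x i - S.
    by rewrite [S + _]addrC addrK.
  by apply: ideal_sub => //; apply: gen_ideal.
- by move=> ->; rewrite subrr mul0r addr0.
Qed.
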